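(* In the setting of the one-step SNA update below, assume (A1) $T\nu\le\frac14$ and work on the event $\mathcal E=\{\|X^\top\eta\|_\infty/n\le\lambda_u\}$. Let $\kappa=8/5$ and $\tau\in\{\kappa,\kappa+1\}$, and for $\lambda>0$ let $S_{\lambda,\tau}=\{i:|\beta^\dagger_i|\ge\lambda\tau\}$. Let $\bar\lambda=\frac{9}{10}\lambda+\delta_u<\lambda$. Given $(\beta^k,d^k)$ with $A^k=\{i:|\beta^k_i+d^k_i|>\lambda\}$, compute $(\beta^{k+1},d^{k+1})$ by one SNA step and set $A^{k+1}=\{i:|\beta^{k+1}_i+d^{k+1}_i|>\lambda\}$. Let $E^k=A^\dagger\setminus A^k$ and $i_k\in\arg\max_{i\in E^k}|\beta^\dagger_i|$ (similarly $i_{k+1}$ for $E^{k+1}$, with value $0$ if the set is empty). Then: (i) if $S_{\lambda,\tau}\subseteq A^k\subseteq A^\dagger$, then $S_{\lambda,\tau}\subseteq A^{k+1}\subseteq A^\dagger$; (ii) if $S_{\lambda,\kappa+1}\subseteq A^k\subseteq A^\dagger$ and $S_{\lambda,\kappa}\not\subseteq A^k$, then $|\beta^\dagger_{i_k}|>|\beta^\dagger_{i_{k+1}}|$.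
   Context: Model $y=X\beta^\dagger+\eta$, $X\in\mathbb{R}^{n\times p}$ with $\|X_j\|_2^2=n$; $A^\dagger=\operatorname{supp}(\beta^\dagger)$, $T=|A^\dagger|$; $\nu=\max_{i\ne j}|(X^\top X)_{ij}|/n$; $\lambda_u=\sigma\sqrt{2\log(p)/n}$, $\delta_u=3\lambda_u$. One SNA step (with $\alpha=0$) from $(\beta^k,d^k)$: with $B^k=(A^k)^c$, $\beta^{k+1}_{B^k}=0$, $d^{k+1}_{A^k}=(\lambda-\bar\lambda)\operatorname{sgn}(\beta^k_{A^k}+d^k_{A^k})$, $\beta^{k+1}_{A^k}=(X_{A^k}^\top X_{A^k})^{-1}(X_{A^k}^\top y-nd^{k+1}_{A^k})$, $d^{k+1}_{B^k}=X_{B^k}^\top(y-X_{A^k}\beta^{k+1}_{A^k})/n$. *)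

(* Defs.v *)
From HB Require Import structures.
From Stdlib Require Import Reals Lra ClassicalEpsilon FunctionalExtensionality.
From mathcomp Require Import all_boot all_order all_algebra.
Set Implicit Arguments. Unset Strict Implicit. Unset Printing Implicit Defensive.
Import Order.TTheory GRing.Theory Num.Theory.

Definition Reqb (x y : R) : bool := if Req_EM_T x y then true else false.
Lemma Reqb_axiom : Equality.axiom Reqb.
Proof. by move=> x y; rewrite /Reqb; case: Req_EM_T => h; constructor. Qed.
HB.instance Definition _ := hasDecEq.Build R Reqb_axiom.

Definition Rfind (P : pred R) (n : nat) : option R :=
  if excluded_middle_informative (exists x, P x)
  then Some (epsilon (inhabits R0) (fun x => P x)) else None.
Lemma Rfind_correct P n x : Rfind P n = Some x -> P x.
Proof.
rewrite /Rfind; case: excluded_middle_informative => // h [<-].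
exact: (epsilon_spec (inhabits R0) (fun x => P x) h).
Qed.
Lemma Rfind_complete (P : pred R) : (exists x, P x) -> exists n, Rfind P n.
Proof. by move=> h; exists 0%N; rewrite /Rfind; case: excluded_middle_informative. Qed.
Lemma Rfind_ext (P Q : pred R) : P =1 Q -> Rfind P =1 Rfind Q.
Proof. by move=> h; have -> : P = Q by apply: functional_extensionality. Qed.
HB.instance Definition _ := hasChoice.Build R Rfind_correct Rfind_complete Rfind_ext.

Lemma R_addA : associative Rplus. Proof. by move=> *; rewrite Rplus_assoc. Qed.
Lemma R_addC : commutative Rplus. Proof. exact: Rplus_comm. Qed.
Lemma R_add0 : left_id R0 Rplus. Proof. exact: Rplus_0_l. Qed.
Lemma R_addN : left_inverse R0 Ropp Rplus. Proof. exact: Rplus_opp_l. Qed.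
HB.instance Definition _ := GRing.isZmodule.Build R R_addA R_addC R_add0 R_addN.

Lemma R_mulA : associative Rmult. Proof. by move=> *; rewrite Rmult_assoc. Qed.
Lemma R_mulC : commutative Rmult. Proof. exact: Rmult_comm. Qed.
Lemma R_mul1 : left_id R1 Rmult. Proof. exact: Rmult_1_l. Qed.
Lemma R_mulDl : left_distributive Rmult Rplus. Proof. exact: Rmult_plus_distr_r. Qed.
Lemma R_one_neq0 : R1 != R0. Proof. by apply/eqP; exact: R1_neq_R0. Qed.
HB.instance Definition _ := GRing.Zmodule_isComNzRing.Build R R_mulA R_mulC R_mul1 R_mulDl R_one_neq0.

Local Open Scope ring_scope.
Definition Rinvx (x : R) : R := if x == R0 then R0 else Rinv x.
Lemma R_mulVf (x : R) : x != 0 -> Rinvx x * x = 1.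
Proof. move=> /negbTE h; rewrite /Rinvx h. apply: Rinv_l. by move/eqP; rewrite h. Qed.
Lemma R_inv0 : Rinvx 0 = 0. Proof. by rewrite /Rinvx eqxx. Qed.
HB.instance Definition _ := GRing.ComNzRing_isField.Build R R_mulVf R_inv0.

Definition Rleb (x y : R) : bool := if Rle_dec x y then true else false.
Definition Rltb (x y : R) : bool := if Rlt_dec x y then true else false.
Lemma RlebP x y : reflect (Rle x y) (Rleb x y).
Proof. by rewrite /Rleb; case: Rle_dec => h; constructor. Qed.
Lemma RltbP x y : reflect (Rlt x y) (Rltb x y).
Proof. by rewrite /Rltb; case: Rlt_dec => h; constructor. Qed.

Lemma R_le0_add (x y : R) : Rleb 0 x -> Rleb 0 y -> Rleb 0 (x + y).
Proof. move=> /RlebP h1 /RlebP h2; apply/RlebP; change (Rle R0 (Rplus x y)); change (Rle R0 x) in h1; change (Rle R0 y) in h2; lra. Qed.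
Lemma R_le0_mul (x y : R) : Rleb 0 x -> Rleb 0 y -> Rleb 0 (x * y).
Proof. move=> /RlebP h1 /RlebP h2; apply/RlebP; exact: Rmult_le_pos. Qed.
Lemma R_le0_anti (x : R) : Rleb 0 x -> Rleb x 0 -> x = 0.
Proof. move=> /RlebP h1 /RlebP h2; change (x = R0); change (Rle R0 x) in h1; change (Rle x R0) in h2; lra. Qed.
Lemma R_sub_ge0 (x y : R) : Rleb 0 (y - x) = Rleb x y.
Proof.
apply/idP/idP => /RlebP h; apply/RlebP;
 [change (Rle R0 (Rplus y (Ropp x))) in h | change (Rle R0 (Rplus y (Ropp x)))]; lra.
Qed.
Lemma R_le0_total (x : R) : Rleb 0 x || Rleb x 0.
Proof. case: (Rle_dec 0 x) => h; [by apply/orP; left; apply/RlebP|]. apply/orP; right; apply/RlebP; change (Rle x R0); change (~ Rle R0 x) in h; lra. Qed.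
Lemma R_normN (x : R) : Rabs (- x) = Rabs x.
Proof. exact: Rabs_Ropp. Qed.
Lemma R_ge0_norm (x : R) : Rleb 0 x -> Rabs x = x.
Proof. by move=> /RlebP h; apply: Rabs_right; change (Rle R0 x) in h; lra. Qed.
Lemma R_lt_def (x y : R) : Rltb x y = (y != x) && Rleb x y.
Proof.
apply/idP/andP.
- move=> /RltbP h; split; [apply/eqP => e; subst; lra | apply/RlebP; lra].
- case=> /eqP h /RlebP h2; apply/RltbP; lra.
Qed.
HB.instance Definition _ := Num.IntegralDomain_isLeReal.Build R R_le0_add R_le0_mul R_le0_anti R_sub_ge0 R_le0_total R_normN R_ge0_norm R_lt_def.


Global Open Scope ring_scope.
Bind Scope ring_scope with Rdefinitions.RbaseSymbolsImpl.R.
Notation R := Rdefinitions.RbaseSymbolsImpl.R (only parsing).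

Definition supp {p : nat} (b : 'cV[R]_p) : {set 'I_p} := [set i | b i 0 != 0].

Definition nu {n p : nat} (X : 'M[R]_(n, p)) : R :=
  \big[Num.max/0]_(ij : 'I_p * 'I_p | ij.1 != ij.2) (`|(X^T *m X) ij.1 ij.2| / n%:R).

Definition lam_u (sigma : R) (n p : nat) : R := sigma * sqrt (2 * ln p%:R / n%:R).
Definition delta_u (sigma : R) (n p : nat) : R := 3 * lam_u sigma n p.

Definition lam_bar (lam sigma : R) (n p : nat) : R := 9 / 10 * lam + delta_u sigma n p.

Definition kappa : R := 8 / 5.

Definition active {p : nat} (lam : R) (b d : 'cV[R]_p) : {set 'I_p} :=
  [set i | lam < `|b i 0 + d i 0|].

Definition S_set {p : nat} (bdag : 'cV[R]_p) (lam tau : R) : {set 'I_p} :=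
  [set i | lam * tau <= `|bdag i 0|].

(* |beta^dagger_{i_E}| for i_E in argmax_{i in E} |beta^dagger_i|, and 0 if E is empty *)
Definition maxabs {p : nat} (bdag : 'cV[R]_p) (E : {set 'I_p}) : R :=
  \big[Num.max/0]_(i in E) `|bdag i 0|.

(* X_A : the columns of X indexed by A (in increasing order) *)
Definition colA {n p : nat} (X : 'M[R]_(n, p)) (A : {set 'I_p}) : 'M[R]_(n, #|A|) :=
  colsub (fun k : 'I_#|A| => enum_val k) X.

(* v_A : the entries of v indexed by A (same order) *)
Definition vecA {p : nat} (A : {set 'I_p}) (v : 'cV[R]_p) : 'cV[R]_#|A| :=
  rowsub (fun k : 'I_#|A| => enum_val k) v.

(* One SNA step (alpha = 0) from (b0, d0) to (b1, d1), with A = A^k, B = A^c. *)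
Definition sna_step {n p : nat} (X : 'M[R]_(n, p)) (y : 'cV[R]_n) (lam lamb : R)
    (b0 d0 b1 d1 : 'cV[R]_p) : Prop :=
  let A := active lam b0 d0 in
  let XA := colA X A in
  [/\ forall i, i \notin A -> b1 i 0 = 0,
      forall i, i \in A -> d1 i 0 = (lam - lamb) * Num.sg (b0 i 0 + d0 i 0),
      vecA A b1 = invmx (XA^T *m XA) *m (XA^T *m y - n%:R *: vecA A d1)
    & forall i, i \notin A -> d1 i 0 = (X^T *m (y - XA *m vecA A b1)) i 0 / n%:R].

(* Main.v *)
Require Import Defs.
From HB Require Import structures.
From mathcomp Require Import all_boot all_order all_algebra.
From Stdlib Require Reals.
From mathcomp Require Import lra ring.
Import Order.TTheory GRing.Theory Num.Theory.

Lemma bigmax_ge0 (I : finType) (P : pred I) (F : I -> R) :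
  0 <= \big[Num.max/0]_(i | P i) `|F i|.
Proof.
apply: (big_ind (fun x : R => 0 <= x)) => //.
by move=> x y hx hy; rewrite le_max hx.
Qed.

Lemma norm_rest (a b : R) : `|a| <= `|a + b| + `|b|.
Proof. by have := ler_normD (a + b) (- b); rewrite normrN addrK. Qed.

Lemma sum_drop (I : finType) (P Q : pred I) (f : I -> R) :
  (forall i, P i -> 0 <= f i) ->
  \sum_(i | P i && Q i) f i <= \sum_(i | P i) f i.
Proof.
move=> h; rewrite big_mkcondr /=; apply: ler_sum => i Pi.
by case: (Q i) => //; exact: h.
Qed.

Lemma offsum (I : finType) (P : pred I) (g v : I -> R) c :
  (forall j, P j -> `|g j| <= c) ->
  `|\sum_(j | P j) g j * v j| <= c * \sum_(j | P j) `|v j|.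
Proof.
move=> h; apply: (le_trans (ler_norm_sum _ _ _)).
rewrite mulr_sumr; apply: ler_sum => j Pj.
rewrite normrM; apply: ler_wpM2r => //; exact: h.
Qed.

Lemma dd (I : finType) (A : {set I}) (G : I -> I -> R) (v : I -> R) (D c W : R) :
  0 < D -> 0 <= c -> 0 <= D - #|A|%:R * c ->
  (forall i, i \in A -> G i i = D) ->
  (forall i j, i != j -> `|G i j| <= c) ->
  (forall i, i \in A -> `|\sum_(j in A) G i j * v j| <= W) ->
  forall i, i \in A -> `|v i| * (D - #|A|%:R * c) <= W.
Proof.
move=> hD hc hK hdiag hoff hW i0 i0A.
have W0 : 0 <= W by apply: le_trans (hW _ i0A).
set V := \big[Num.max/0]_(j in A) `|v j|.
have hV0 : 0 <= V by exact: bigmax_ge0.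
have hVi : forall i, i \in A -> `|v i| <= V.
  by move=> i iA; exact: (le_bigmax_cond _ (fun j => `|v j|) iA).
have hsum : forall i, i \in A -> D * `|v i| <= W + c * (#|A|%:R * V).
  move=> i iA; have := hW i iA; rewrite (bigD1 i iA) /= hdiag // => h1.
  have h2 := norm_rest (D * v i) (\sum_(j in A | j != i) G i j * v j).
  have h3 : `|\sum_(j in A | j != i) G i j * v j| <= c * \sum_(j in A | j != i) `|v j|.
    by apply: offsum => j /andP [_ ji]; apply: hoff; rewrite eq_sym.
  have h4 : \sum_(j in A | j != i) `|v j| <= \sum_(j in A) `|v j|.
    by apply: sum_drop.
  have h5 : \sum_(j in A) `|v j| <= #|A|%:R * V.
    rewrite mulr_natl -sumr_const; apply: ler_sum => j jA; exact: hVi.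
  have h6 : c * \sum_(j in A | j != i) `|v j| <= c * (#|A|%:R * V).
    apply: ler_wpM2l => //; exact: le_trans h4 h5.
  rewrite normrM (gtr0_norm hD) in h2; lra.
have hDV : D * V <= W + c * (#|A|%:R * V).
  have : V <= (W + c * (#|A|%:R * V)) / D.
    apply: bigmax_le.
      by apply: divr_ge0; [apply: addr_ge0 => //; apply: mulr_ge0 => //; apply: mulr_ge0|exact: ltW].
    move=> i iA /=; rewrite ler_pdivlMr // mulrC; exact: hsum.
  by rewrite ler_pdivlMr // mulrC.
have : `|v i0| * (D - #|A|%:R * c) <= V * (D - #|A|%:R * c).
  by apply: ler_wpM2r => //; exact: hVi.
lra.
Qed.
Lemma colAE n p (X : 'M[R]_(n, p)) A r l : colA X A r l = X r (enum_val l).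
Proof. by rewrite /colA mxE. Qed.
Lemma vecAE p (A : {set 'I_p}) (v : 'cV[R]_p) l : vecA A v l 0 = v (enum_val l) 0.
Proof. by rewrite /vecA mxE. Qed.

Lemma sum_enum p (A : {set 'I_p}) (F : 'I_p -> R) :
  (forall j, j \notin A -> F j = 0) -> \sum_(k < #|A|) F (enum_val k) = \sum_j F j.
Proof.
move=> h; rewrite -big_enum_val big_mkcond /=; apply: eq_bigr => j _.
by case: ifP => // /negbT /h ->.
Qed.

Lemma colA_mul n p (X : 'M[R]_(n, p)) (A : {set 'I_p}) (v : 'cV[R]_p) :
  (forall j, j \notin A -> v j 0 = 0) -> colA X A *m vecA A v = X *m v.
Proof.
move=> h; apply/matrixP => r z; rewrite (ord1 z) !mxE.
under eq_bigr do rewrite colAE vecAE.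
by apply: sum_enum => j /h ->; rewrite mulr0.
Qed.

Lemma colAtE n p (X : 'M[R]_(n, p)) (A : {set 'I_p}) (y : 'cV[R]_n) k :
  ((colA X A)^T *m y) k 0 = (X^T *m y) (enum_val k) 0.
Proof. rewrite !mxE; apply: eq_bigr => r _. by rewrite !mxE. Qed.

Lemma MAE n p (X : 'M[R]_(n, p)) (A : {set 'I_p}) k l :
  ((colA X A)^T *m colA X A) k l = (X^T *m X) (enum_val k) (enum_val l).
Proof. by rewrite !mxE; apply: eq_bigr => r _; rewrite !mxE. Qed.

Lemma keyK n p (X : 'M[R]_(n, p)) (y : 'cV[R]_n) lam lamb (b0 d0 b1 d1 : 'cV[R]_p) :
  (0 < n)%N ->
  let A := active lam b0 d0 in
  (colA X A)^T *m colA X A \in unitmx ->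
  sna_step X y lam lamb b0 d0 b1 d1 ->
  n%:R *: d1 = X^T *m y - (X^T *m X) *m b1.
Proof.
move=> n0 A hU [h1 h2 h3 h4].
have hN : n%:R != 0 :> R by rewrite pnatr_eq0 -lt0n.
apply/matrixP => i z; rewrite (ord1 z) {z} !mxE.
case: (boolP (i \in A)) => iA.
- have E := congr1 (mulmx ((colA X A)^T *m colA X A)) h3.
  rewrite mulKVmx // in E.
  set k := enum_rank_in iA i.
  have ek : enum_val k = i by rewrite enum_rankK_in.
  have F1 : (((colA X A)^T *m colA X A) *m vecA A b1) k 0 = ((X^T *m X) *m b1) i 0.
    rewrite mxE [RHS]mxE; under eq_bigr do rewrite MAE vecAE ek.
    by apply: (@sum_enum _ A (fun j => (X^T *m X) i j * b1 j 0)) => j /h1 ->; rewrite mulr0.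
  have F2 : ((colA X A)^T *m y - n%:R *: vecA A d1) k 0 = (X^T *m y) i 0 - n%:R * d1 i 0.
    rewrite mxE (colAtE _ _ X A y k) ek [X in _ + X = _]mxE [X in _ - X = _]mxE; congr (_ - _ * _); rewrite -ek; exact: (vecAE _ A d1 k).
  rewrite -E F1 in F2.
  rewrite !mxE in F2; lra.
- by rewrite h4 // colA_mul // mulmxBr mulmxA mulrC divfK // !mxE.
Qed.

Lemma CdiagE n p (X : 'M[R]_(n, p)) j :
  (X^T *m X) j j = \sum_(i < n) X i j ^+ 2.
Proof. by rewrite mxE; apply: eq_bigr => i _; rewrite mxE expr2. Qed.

Lemma unitM n p (X : 'M[R]_(n, p)) (A : {set 'I_p}) (nv : R) :
  (0 < n)%N -> (forall j : 'I_p, \sum_(i < n) X i j ^+ 2 = n%:R) ->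
  (forall i j, i != j -> `|(X^T *m X) i j| <= n%:R * nv) -> 0 <= nv ->
  #|A|%:R * nv < 1 ->
  (colA X A)^T *m colA X A \in unitmx.
Proof.
move=> n0 hcol hoff hnv hA.
have hN : 0 < n%:R :> R by rewrite ltr0n.
rewrite -row_free_unit; apply: inj_row_free => u hu.
apply/rowP => l; rewrite mxE.
have := @dd _ [set: 'I_#|A|] (fun k l => ((colA X A)^T *m colA X A) l k) (fun k => u 0 k)
  n%:R (n%:R * nv) 0 hN.
rewrite cardsT card_ord.
have K : 0 < n%:R - #|A|%:R * (n%:R * nv).
  have : 0 < n%:R * (1 - #|A|%:R * nv) by apply: mulr_gt0; lra.
  by rewrite mulrBr mulr1 mulrCA.
move/(_ (mulr_ge0 (ltW hN) hnv) (ltW K)).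
have hd : forall i, i \in [set: 'I_#|A|] -> ((colA X A)^T *m colA X A) i i = n%:R.
  by move=> i _; rewrite MAE CdiagE hcol.
move/(_ hd).
have ho : forall i j, i != j -> `|((colA X A)^T *m colA X A) j i| <= n%:R * nv.
  move=> i j ij; rewrite MAE; apply: hoff.
  by apply: contra ij => /eqP /enum_val_inj ->.
move/(_ ho).
have hs : forall i, i \in [set: 'I_#|A|] ->
    `|\sum_(j in [set: 'I_#|A|]) ((colA X A)^T *m colA X A) j i * u 0 j| <= 0.
  move=> i _; have := congr1 (fun M : 'rV[R]_#|A| => M 0 i) hu; rewrite !mxE => h.
  under eq_bigl do rewrite in_setT.
  by rewrite (eq_bigr (fun j => u 0 j * ((colA X A)^T *m colA X A) j i)) ?h ?normr0 // => j _; rewrite mulrC.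
move/(_ hs l (in_setT l)) => h.
have : `|u 0 l| <= 0 by rewrite -(pmulr_lle0 _ K).
by rewrite normr_le0 => /eqP.
Qed.

Lemma split_sum p (A : {set 'I_p}) (F : 'I_p -> R) :
  \sum_j F j = \sum_(j in A) F j + \sum_(j | j \notin A) F j.
Proof. by rewrite (bigID (fun j => j \in A)) /=. Qed.

Lemma coreU n p (X : 'M[R]_(n, p)) (bdag : 'cV[R]_p) (eta y : 'cV[R]_n)
    (lam lamb : R) (b0 d0 b1 d1 : 'cV[R]_p) (nv lu : R) :
  (0 < n)%N -> (forall j : 'I_p, \sum_(i < n) X i j ^+ 2 = n%:R) ->
  y = X *m bdag + eta ->
  (forall i j, i != j -> `|(X^T *m X) i j| <= n%:R * nv) -> 0 <= nv ->
  #|supp bdag|%:R * nv <= 1 / 4 ->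
  (forall j, `|(X^T *m eta) j 0| <= n%:R * lu) -> 0 <= lu ->
  0 < lam -> 0 <= lam - lamb ->
  sna_step X y lam lamb b0 d0 b1 d1 ->
  active lam b0 d0 \subset supp bdag ->
  forall j, `|b1 j 0 + d1 j 0 - bdag j 0| * (1 - #|active lam b0 d0|%:R * nv) <=
    lu + #|supp bdag :\: active lam b0 d0|%:R * nv * maxabs bdag (supp bdag :\: active lam b0 d0)
       + #|active lam b0 d0|%:R * nv * (lam - lamb).
Proof.
move=> n0 hcol hy hoff hnv hT hg hlu hlam hc hstep hAS.
set A := active lam b0 d0; set S := supp bdag; set E := S :\: A.
set Mx := maxabs bdag E; set c := lam - lamb.
set a := #|A|%:R; set e := #|E|%:R.
set C := X^T *m X.
have hN : 0 < n%:R :> R by rewrite ltr0n.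
have hae : a + e = #|S|%:R.
  by rewrite /a /e -natrD -(cardsID A S) (setIidPr hAS).
have ha0 : 0 <= a by rewrite ler0n.
have he0 : 0 <= e by rewrite ler0n.
have hae' : a * nv + e * nv <= 1 / 4 by rewrite -mulrDl hae.
have hanv : 0 <= a * nv by apply: mulr_ge0.
have henv : 0 <= e * nv by apply: mulr_ge0.
have hU : (colA X A)^T *m colA X A \in unitmx.
  apply: (@unitM n p X A nv n0 hcol hoff hnv); rewrite -/a; lra.
have K := @keyK _ _ X y lam lamb b0 d0 b1 d1 n0 hU hstep.
case: hstep => h1 h2 _ _.
pose d j := bdag j 0 - b1 j 0.
have hK : forall i, n%:R * d1 i 0 = \sum_j C i j * d j + (X^T *m eta) i 0.
  move=> i; have := congr1 (fun M : 'cV[R]_p => M i 0) K.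
  rewrite hy mulmxDr mulmxA -/C.
  have -> : C *m bdag + X^T *m eta - C *m b1 = C *m (bdag - b1) + X^T *m eta.
    by rewrite mulmxBr addrAC.
  rewrite !mxE => ->.
  by congr (_ + _); apply: eq_bigr => j _; rewrite !mxE.
have hCd : forall i, C i i = n%:R by move=> i; rewrite /C CdiagE hcol.
have hdA : forall i, i \in A -> `|d1 i 0| = c.
  move=> i iA; rewrite h2 // normrM normr_sg ger0_norm //.
  have -> : (b0 i 0 + d0 i 0 != 0).
    move: iA; rewrite /A /active inE; apply: contraTneq => ->.
    by rewrite normr0 -leNgt ltW.
  by rewrite mulr1.
have hdout : forall j, j \notin A -> d j = bdag j 0.
  by move=> j /h1 hb; rewrite /d hb subr0.
have hMx0 : 0 <= Mx by exact: bigmax_ge0.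
have hMxE : forall j, j \in E -> `|bdag j 0| <= Mx.
  by move=> j jE; exact: (le_bigmax_cond _ (fun i => `|bdag i 0|) jE).
have hLout : \sum_(j | j \notin A) `|d j| <= e * Mx.
  apply: (@le_trans _ _ (\sum_(j | j \notin A) (if j \in S then Mx else 0))).
    apply: ler_sum => j jA; rewrite hdout //; case: ifP => jS.
      by apply: hMxE; rewrite /E inE jS jA.
    have : bdag j 0 = 0 by move: jS; rewrite /S /supp inE => /negbT; rewrite negbK => /eqP.
    by move=> ->; rewrite normr0.
  rewrite -big_mkcondr /= (eq_bigl (fun j => j \in E)); first by rewrite sumr_const /e mulr_natl.
  by move=> j /=; rewrite /E in_setD.
pose f j := d j - d1 j 0.
pose W := lu + e * nv * Mx + a * nv * c.
have hW : forall i, i \in A -> `|\sum_(j in A) C i j * f j| <= n%:R * W.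
  move=> i iA.
  have e1 : \sum_(j in A) C i j * f j =
      \sum_(j in A) C i j * d j - \sum_(j in A) C i j * d1 j 0.
    by rewrite -sumrB; apply: eq_bigr => j _; rewrite /f mulrBr.
  have e2 := hK i; rewrite (@split_sum _ A) in e2.
  have e3 : \sum_(j in A) C i j * d1 j 0 =
      n%:R * d1 i 0 + \sum_(j in A | j != i) C i j * d1 j 0.
    by rewrite (bigD1 i iA) /= hCd.
  have bb1 : `|\sum_(j | j \notin A) C i j * d j| <= n%:R * nv * (e * Mx).
    apply: le_trans (@offsum _ (fun j => j \notin A) (fun j => C i j) d (n%:R * nv) _) _.
      by move=> j jA; apply: hoff; apply: contraNneq jA => <-.
    by apply: ler_wpM2l; [apply: mulr_ge0 => //; exact: ltW | exact: hLout].
  have bb2 : `|\sum_(j in A | j != i) C i j * d1 j 0| <= n%:R * nv * (a * c).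
    apply: le_trans (@offsum _ (fun j => (j \in A) && (j != i)) (fun j => C i j) (fun j => d1 j 0) (n%:R * nv) _) _.
      by move=> j /andP [_ ji]; apply: hoff; rewrite eq_sym.
    apply: ler_wpM2l; first by apply: mulr_ge0 => //; exact: ltW.
    apply: le_trans (@sum_drop _ (fun j => j \in A) (fun j => j != i) (fun j => `|d1 j 0|) _) _ => //.
    rewrite (eq_bigr (fun _ => c)); last by move=> j jA; rewrite hdA.
    by rewrite sumr_const mulr_natl.
  have hb := hg i.
  have -> : \sum_(j in A) C i j * f j =
     - (\sum_(j | j \notin A) C i j * d j + (X^T *m eta) i 0
        + \sum_(j in A | j != i) C i j * d1 j 0).
    rewrite e1 e3; lra.
  rewrite normrN.
  apply: le_trans (ler_normD _ _) _.
  apply: le_trans (lerD (ler_normD _ _) (lexx _)) _.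
  rewrite /W; lra.
have hdiag : forall i, i \in A -> C i i = n%:R by move=> i _; exact: hCd.
have hK0 : 0 <= n%:R - a * (n%:R * nv).
  have : 0 <= n%:R * (1 - a * nv) by apply: mulr_ge0; lra.
  by rewrite mulrBr mulr1 mulrCA.
have hphi : forall i, i \in A -> `|f i| * (1 - a * nv) <= W.
  move=> i iA.
  have := @dd _ A (fun i j => C i j) f n%:R (n%:R * nv) (n%:R * W) hN
    (mulr_ge0 (ltW hN) hnv) hK0 hdiag (fun i j ij => hoff i j ij) hW i iA.
  have -> : `|f i| * (n%:R - a * (n%:R * nv)) = n%:R * (`|f i| * (1 - a * nv)) by ring.
  by rewrite ler_pM2l.
move=> j; rewrite -/a -/e -/Mx -/c -/W.
case: (boolP (j \in A)) => jA.
  have -> : b1 j 0 + d1 j 0 - bdag j 0 = - f j by rewrite /f /d; ring.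
  by rewrite normrN; exact: hphi.
have hb1 : b1 j 0 = 0 by exact: h1.
have -> : b1 j 0 + d1 j 0 - bdag j 0 = d1 j 0 - d j by rewrite /d hb1; ring.
pose Z := \sum_(l in A) `|d l|.
have hZ : (1 - a * nv) * Z <= a * (W + (1 - a * nv) * c).
  rewrite /Z mulr_sumr.
  apply: (@le_trans _ _ (\sum_(l in A) (W + (1 - a * nv) * c))).
    apply: ler_sum => l lA.
    have : `|d l| <= `|f l| + c.
      by rewrite -(hdA l lA) /f; have := ler_normD (d l - d1 l 0) (d1 l 0); rewrite subrK.
    move=> hl; have := hphi l lA.
    have h1a : 0 <= 1 - a * nv by lra.
    have := ler_wpM2l h1a hl; lra.
  by rewrite sumr_const -mulr_natl; apply: lexx.
have e4 := hK j.
rewrite (bigD1 j) //= (bigID (fun l => l \in A)) /= hCd in e4.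
have bb1 : `|\sum_(l | (l != j) && (l \in A)) C j l * d l| <= n%:R * nv * Z.
  apply: le_trans (@offsum _ (fun l => (l != j) && (l \in A)) (fun l => C j l) d (n%:R * nv) _) _.
    by move=> l /andP [lj _]; apply: hoff; rewrite eq_sym.
  apply: ler_wpM2l; first by apply: mulr_ge0 => //; exact: ltW.
  rewrite (eq_bigl (fun l => (l \in A) && (l != j))); last by move=> l; rewrite andbC.
  by apply: sum_drop.
have bb2 : `|\sum_(l | (l != j) && (l \notin A)) C j l * d l| <= n%:R * nv * (e * Mx).
  apply: le_trans (@offsum _ (fun l => (l != j) && (l \notin A)) (fun l => C j l) d (n%:R * nv) _) _.
    by move=> l /andP [lj _]; apply: hoff; rewrite eq_sym.
  apply: ler_wpM2l; first by apply: mulr_ge0 => //; exact: ltW.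
  apply: le_trans hLout.
  rewrite (eq_bigl (fun l => (l \notin A) && (l != j))); last by move=> l; rewrite andbC.
  by apply: sum_drop.
have hb := hg j.
have hdj : n%:R * `|d1 j 0 - d j| <= n%:R * (nv * Z + nv * (e * Mx) + lu).
  have eq : n%:R * (d1 j 0 - d j) = \sum_(l | (l != j) && (l \in A)) C j l * d l
     + \sum_(l | (l != j) && (l \notin A)) C j l * d l + (X^T *m eta) j 0 by lra.
  have : `|n%:R * (d1 j 0 - d j)| <= n%:R * (nv * Z + nv * (e * Mx) + lu).
    rewrite eq.
    apply: le_trans (ler_normD _ _) _.
    apply: le_trans (lerD (ler_normD _ _) (lexx _)) _.
    lra.
  by rewrite normrM gtr0_norm.
rewrite ler_pM2l // in hdj.
have h1a : 0 <= 1 - a * nv by lra.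
have := ler_wpM2l h1a hdj.
have := ler_wpM2l hnv hZ.
rewrite /W; lra.
Qed.

Lemma bigmax_ge0' (I : finType) (P : pred I) (F : I -> R) :
  (forall i, P i -> 0 <= F i) -> 0 <= \big[Num.max/0]_(i | P i) F i.
Proof.
move=> h; apply: (big_ind (fun x : R => 0 <= x)) => //.
by move=> x y hx hy; rewrite le_max hx.
Qed.

Theorem mainTheorem11 (n p : nat) (X : 'M[R]_(n, p)) (bdag : 'cV[R]_p)
    (eta y : 'cV[R]_n) (sigma lam : R) (b0 d0 b1 d1 : 'cV[R]_p) :
  (0 < n)%N ->
  0 < sigma ->
  (forall j : 'I_p, \sum_(i < n) X i j ^+ 2 = n%:R) ->
  y = X *m bdag + eta ->
  (* (A1) T * nu <= 1/4 *)
  #|supp bdag|%:R * nu X <= 1 / 4 ->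
  (* event E : ||X^T eta||_oo / n <= lambda_u *)
  (forall j : 'I_p, `|(X^T *m eta) j 0| / n%:R <= lam_u sigma n p) ->
  0 < lam ->
  lam_bar lam sigma n p < lam ->
  sna_step X y lam (lam_bar lam sigma n p) b0 d0 b1 d1 ->
  (forall tau : R, tau = kappa \/ tau = kappa + 1 ->
     S_set bdag lam tau \subset active lam b0 d0 ->
     active lam b0 d0 \subset supp bdag ->
     S_set bdag lam tau \subset active lam b1 d1 /\
     active lam b1 d1 \subset supp bdag) /\
  (S_set bdag lam (kappa + 1) \subset active lam b0 d0 ->
   active lam b0 d0 \subset supp bdag ->
   ~~ (S_set bdag lam kappa \subset active lam b0 d0) ->
   maxabs bdag (supp bdag :\: active lam b1 d1) <
     maxabs bdag (supp bdag :\: active lam b0 d0)).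
Proof.
move=> n0 hsig hcol hy hA1 hev hlam hbar hstep.
have hN : 0 < n%:R :> R by rewrite ltr0n.
set nv := nu X.
set lu := lam_u sigma n p.
set lamb := lam_bar lam sigma n p.
have hnv : 0 <= nv.
  apply: bigmax_ge0' => ij _; apply: divr_ge0 => //; exact: ltW.
have hoff : forall i j, i != j -> `|(X^T *m X) i j| <= n%:R * nv.
  move=> i j ij; rewrite -ler_pdivrMl //.
  rewrite mulrC; exact: (le_bigmax_cond _ (fun ij : 'I_p * 'I_p => `|(X^T *m X) ij.1 ij.2| / n%:R) (j := (i, j)) (P := fun ij : 'I_p * 'I_p => ij.1 != ij.2) ij).
have hlu : 0 <= lu.
  rewrite /lu /lam_u; apply: mulr_ge0; first exact: ltW.
  apply/RlebP; exact: R_sqrt.sqrt_pos.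
have hg : forall j, `|(X^T *m eta) j 0| <= n%:R * lu.
  by move=> j; rewrite -ler_pdivrMl // mulrC; exact: hev.
have hlamb : lamb = 9 / 10 * lam + 3 * lu by [].
rewrite -/lamb in hbar hstep.
have hc : 0 <= lam - lamb by lra.
set A := active lam b0 d0; set S := supp bdag; set E := S :\: A.
set A1 := active lam b1 d1.
set Mx := maxabs bdag E.
have core : A \subset S ->
   (forall j, bdag j 0 = 0 -> Mx <= 13 / 5 * lam -> ~~ (lam < `|b1 j 0 + d1 j 0|)) /\
   (forall j, Mx <= `|bdag j 0| -> 8 / 5 * lam <= `|bdag j 0| -> lam < `|b1 j 0 + d1 j 0|).
  move=> hAS.
  have U := @coreU n p X bdag eta y lam lamb b0 d0 b1 d1 nv lu n0 hcol hy hoff hnv hA1 hg hlu hlam hc hstep hAS.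
  rewrite -/A -/S -/E -/Mx hlamb in U.
  set a := #|A|%:R in U; set e := #|E|%:R in U.
  have hae : a + e = #|S|%:R.
    by rewrite /a /e -natrD -(cardsID A S) (setIidPr hAS).
  have ha0 : 0 <= a by rewrite ler0n.
  have he0 : 0 <= e by rewrite ler0n.
  have hae' : a * nv + e * nv <= 1 / 4 by rewrite -mulrDl hae.
  have hanv : 0 <= a * nv by apply: mulr_ge0.
  have henv : 0 <= e * nv by apply: mulr_ge0.
  have hMx0 : 0 <= Mx by apply: bigmax_ge0.
  have hal : 0 <= a * nv * lu by apply: mulr_ge0.
  have hala : 0 <= a * nv * lam by apply: mulr_ge0 => //; exact: ltW.
  have h1a : 0 < 1 - a * nv by lra.
  split.
  - move=> j hb0 hMx; rewrite -leNgt.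
    have := U j; rewrite hb0 subr0 => hU.
    have h2 : e * nv * Mx <= e * nv * (13 / 5 * lam) by apply: ler_wpM2l.
    have h3 : e * nv * lam <= (1 / 4 - a * nv) * lam.
      by apply: ler_wpM2r; [exact: ltW | lra].
    have : `|b1 j 0 + d1 j 0| * (1 - a * nv) <= lam * (1 - a * nv) by lra.
    by rewrite ler_pM2r.
  - move=> j hB hB1.
    have := U j => hU.
    set B := `|bdag j 0| in hB hB1 *.
    have hB0 : 0 <= B by exact: normr_ge0.
    have ht : B <= `|b1 j 0 + d1 j 0| + `|b1 j 0 + d1 j 0 - bdag j 0|.
      by have := ler_normB (b1 j 0 + d1 j 0) (b1 j 0 + d1 j 0 - bdag j 0); rewrite opprB addrC subrK.
    have h2 : e * nv * Mx <= e * nv * B by apply: ler_wpM2l.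
    have h3 : e * nv * B <= (1 / 4 - a * nv) * B by apply: ler_wpM2r => //; lra.
    have h4 := ler_wpM2r (ltW h1a) ht.
    have : lam * (1 - a * nv) < `|b1 j 0 + d1 j 0| * (1 - a * nv) by lra.
    by rewrite ltr_pM2r.
split.
- move=> tau htau hSA hAS.
  have [hG1 hG2] := core hAS.
  have ht1 : 8 / 5 <= tau by case: htau => ->; rewrite /kappa; lra.
  have ht2 : tau <= 13 / 5 by case: htau => ->; rewrite /kappa; lra.
  have hMx : Mx <= lam * tau.
    apply: bigmax_le; first by apply: mulr_ge0; [exact: ltW | lra].
    move=> i; rewrite /E in_setD => /andP [iA _].
    have : i \notin S_set bdag lam tau by apply: contra iA; apply: (subsetP hSA).
    by rewrite inE -ltNge => /ltW.
  split.
  + apply/subsetP => i; rewrite inE => hi; rewrite inE.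
    apply: hG2; first exact: le_trans hMx hi.
    have := ler_wpM2l (ltW hlam) ht1; lra.
  + apply/subsetP => i; apply: contraLR; rewrite /S /supp inE negbK => /eqP hb.
    rewrite inE; apply: hG1 => //.
    have := ler_wpM2l (ltW hlam) ht2; lra.
- move=> hS1 hAS hnS.
  have [_ hG2] := core hAS.
  have [i iS iA] := subsetPn hnS.
  move: iS; rewrite inE /kappa => hi.
  have hpos : 0 < lam * (8 / 5) by apply: mulr_gt0 => //; lra.
  have iE : i \in E.
    rewrite /E in_setD iA /S /supp inE /=.
    by apply/eqP => h0; move: hi; rewrite h0 normr0 leNgt hpos.
  have hMx : `|bdag i 0| <= Mx by exact: (le_bigmax_cond _ (fun i => `|bdag i 0|) iE).
  have hMxk : lam * (8 / 5) <= Mx by exact: le_trans hi hMx.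
  apply: bigmax_lt; first by lra.
  move=> j; rewrite in_setD => /andP [jA1 _].
  rewrite ltNge; apply/negP => hj.
  move/negP: jA1; apply; rewrite inE; apply: hG2 => //; lra.
Qed.
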